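(* Let $G$ be a plane graph on $n\ge 174$ vertices containing no subgraph isomorphic to $C_3\dot\cup\Theta_4$. If $|E_I(G)|>\frac n2$ and $\Delta_I(G)\le 9$, then $|E_I(G)|\le \frac n2+4$. Moreover, if $|E_I(G)|=\lfloor n/2\rfloor+4$, then $G$ contains a subgraph isomorphic to $\left(\lfloor\frac{n-2}{2}\rfloor K_2\right)+K_2$.
   Context: $\Theta_4$ is $K_4$ minus one edge and $C_3\dot\cup\Theta_4$ is its vertex-disjoint union with a triangle. For a plane graph $G$, a 3-face is a face whose boundary has length 3; $E_I(G)$ is the set of edges of $G$ lying on the boundaries of two 3-faces, and $\Delta_I(G)$ is the maximum degree of the spanning subgraph of $G$ with edge set $E_I(G)$. $tK_2$ is a matching of $t$ edges and $A+B$ is the join of $A$ and $B$. *)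

(* Defs.v *)
From mathcomp Require Import all_boot.
Set Implicit Arguments. Unset Strict Implicit. Unset Printing Implicit Defensive.

Definition simple_graph (T : finType) (e : rel T) : Prop :=
  symmetric e /\ irreflexive e.

Definition darts (T : finType) (e : rel T) : {set T * T} :=
  [set p : T * T | e p.1 p.2].

Definition facef (T : finType) (sigma : T * T -> T * T) (p : T * T) : T * T :=
  sigma (p.2, p.1).

(* the facial orbit (boundary walk of a face of the component) through p *)
Definition faceorb (T : finType) (sigma : T * T -> T * T) (p : T * T)
  : {set T * T} := [set q | fconnect (facef sigma) p q].

Definition comp (T : finType) (e : rel T) (u : T) : {set T} :=
  [set v | connect e u v].

Definition rotation_system (T : finType) (e : rel T)
  (sigma : T * T -> T * T) : Prop :=
  (forall p, p \in darts e -> sigma p \in darts e /\ (sigma p).1 = p.1) /\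
  (forall p q, p \in darts e -> q \in darts e -> p.1 = q.1 ->
     fconnect sigma p q).

(* every component with an edge is embedded in the sphere (genus 0):
   V_c - E_c + F_c = 2, written as 2 V_c + 2 F_c = 4 + (#darts of c). *)
Definition genus0 (T : finType) (e : rel T) (sigma : T * T -> T * T) : Prop :=
  forall u : T, (exists v, e u v) ->
    2 * #|comp e u|
    + 2 * #|[set faceorb sigma p | p in [set q in darts e | q.1 \in comp e u]]|
    = 4 + #|[set q in darts e | q.1 \in comp e u]|.

(* Faces of the whole (possibly disconnected) plane graph, each given by the
   set of darts of its boundary walk(s): every face is a union of facial
   orbits, at most one from each component, the faces partition the darts,
   and the incidence graph "components -- faces" is a tree. *)
Definition face_rel (T : finType) (e : rel T) (F : {set {set T * T}})
  (p q : T * T) : bool :=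
  [&& p \in darts e, q \in darts e &
      [exists X in F, (p \in X) && (q \in X)] || connect e p.1 q.1].

Definition plane_faces (T : finType) (e : rel T) (sigma : T * T -> T * T)
  (F : {set {set T * T}}) : Prop :=
  partition F (darts e) /\
  (forall X, X \in F -> forall p, p \in X -> faceorb sigma p \subset X) /\
  (forall X, X \in F -> forall p q, p \in X -> q \in X ->
     connect e p.1 q.1 -> faceorb sigma p = faceorb sigma q) /\
  (darts e != set0 ->
     (forall p q, p \in darts e -> q \in darts e -> connect (face_rel e F) p q)
     /\ #|[set faceorb sigma p | p in darts e]| + 1
        = #|[set comp e p.1 | p in darts e]| + #|F|).

Definition plane_embedding (T : finType) (e : rel T) (sigma : T * T -> T * T)
  (F : {set {set T * T}}) : Prop :=
  simple_graph e /\ rotation_system e sigma /\ genus0 e sigma /\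
  plane_faces e sigma F.

Definition three_face (T : finType) (X : {set T * T}) : bool := #|X| == 3.

Definition on_face (T : finType) (p : T * T) (X : {set T * T}) : bool :=
  (p \in X) || ((p.2, p.1) \in X).

Definition EI_dart (T : finType) (F : {set {set T * T}}) (p : T * T) : bool :=
  [exists X in F, exists Y in F,
     [&& X != Y, three_face X, three_face Y, on_face p X & on_face p Y]].

Definition E_I (T : finType) (e : rel T) (F : {set {set T * T}})
  : {set {set T}} :=
  [set [set p.1; p.2] | p in [set q in darts e | EI_dart F q]].

Definition degI (T : finType) (e : rel T) (F : {set {set T * T}}) (u : T)
  : nat := #|[set v | [set u; v] \in E_I e F]|.

Definition contains_subgraph (T : finType) (e : rel T) (k : nat)
  (H : rel 'I_k) : Prop :=
  exists f : 'I_k -> T, injective f /\ forall i j, H i j -> e (f i) (f j).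

(* C_3 disjoint union Theta_4 on vertices 0..6: triangle {0,1,2};
   K_4 minus the edge {5,6} on {3,4,5,6}. *)
Definition C3_Theta4 : rel 'I_7 := fun i j =>
  let a := val i in let b := val j in
  (a != b) &&
  (((a < 3) && (b < 3)) ||
   [&& 3 <= a, 3 <= b & ~~ ((4 < a) && (4 < b))]).

(* (t K_2) + K_2 on vertices 0..2t+1: matching {2i,2i+1} for i<t, the
   edge {2t,2t+1}, and all edges between {2t,2t+1} and the rest. *)
Definition matching_join_K2 (t : nat) : rel 'I_(t.*2 + 2) := fun i j =>
  let a := val i in let b := val j in
  (a != b) && [|| t.*2 <= a, t.*2 <= b | a./2 == b./2].

(* Main.v *)
Require Import Defs.
From mathcomp Require Import all_boot zify.
Set Implicit Arguments. Unset Strict Implicit. Unset Printing Implicit Defensive.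

Section Work.
Variables (T : finType) (e : rel T) (sigma : T * T -> T * T) (F : {set {set T * T}}).
Hypothesis esym : symmetric e.
Hypothesis eirr : irreflexive e.
Hypothesis sig_dart : forall p, p \in darts e -> sigma p \in darts e /\ (sigma p).1 = p.1.
Hypothesis sig_conn : forall p q, p \in darts e -> q \in darts e -> p.1 = q.1 -> fconnect sigma p q.
Hypothesis Fpart : partition F (darts e).
Hypothesis Forb : forall X, X \in F -> forall p, p \in X -> faceorb sigma p \subset X.

Local Notation f := (facef sigma).

Lemma dartE p : (p \in darts e) = e p.1 p.2.
Proof. by rewrite inE. Qed.

Lemma iter_in (g : T * T -> T * T) (A : {pred T * T}) k p :
  (forall q, q \in A -> g q \in A) -> p \in A -> iter k g p \in A.
Proof. by move=> H; elim: k => //= k IH /IH; apply: H. Qed.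

Lemma fconn_in (g : T * T -> T * T) (A : {pred T * T}) p q :
  (forall q, q \in A -> g q \in A) -> p \in A -> fconnect g p q -> q \in A.
Proof. by move=> H pA /iter_findex <-; apply: iter_in. Qed.

Lemma sigma_inj : {in darts e &, injective sigma}.
Proof.
move=> q1 q2 d1 d2 E.
have E1 : q1.1 = q2.1.
  by rewrite -(sig_dart d1).2 -(sig_dart d2).2 E.
pose D := [set r in darts e | r.1 == q1.1].
have sD : forall r, r \in D -> sigma r \in D.
  move=> r; rewrite inE => /andP[dr /eqP r1].
  by have [H1 H2] := sig_dart dr; rewrite inE H1 H2 r1 eqxx.
have DS : D \subset sigma @: D.
  apply/subsetP => r rD.
  have rd : r \in darts e by move: rD; rewrite inE => /andP[].
  have srD := sD _ rD.
  have srd : sigma r \in darts e by move: srD; rewrite inE => /andP[].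
  have /iter_findex := sig_conn srd rd (sig_dart rd).2.
  rewrite -iterSr /= => <-.
  by apply: imset_f; apply: iter_in.
have injD : {in D &, injective sigma}.
  by apply/imset_injP; rewrite eqn_leq leq_imset_card /= subset_leq_card.
by apply: injD => //; rewrite inE ?d1 ?d2 ?eqxx //= -E1 eqxx.
Qed.
Local Notation tri u v w := [set (u,v); (v,w); (w,u)].

Lemma revd p : p \in darts e -> (p.2, p.1) \in darts e.
Proof. by rewrite !dartE /= esym. Qed.

Lemma f_dart p : p \in darts e -> f p \in darts e /\ (f p).1 = p.2.
Proof. by move=> /revd /sig_dart. Qed.

Lemma f_neq p : p \in darts e -> f p != p.
Proof.
move=> pd; apply/eqP => E; have [_ H] := f_dart pd.
by move: pd; rewrite dartE -H E eirr.
Qed.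

Lemma f_inj : {in darts e &, injective f}.
Proof.
move=> q1 q2 d1 d2; rewrite /facef => /(sigma_inj (revd d1) (revd d2)) [E1 E2].
by case: q1 q2 E1 E2 {d1 d2} => [a b] [c d] /= -> ->.
Qed.

Lemma F_sub X : X \in F -> X \subset darts e.
Proof.
move=> XF; rewrite -(cover_partition Fpart); exact: bigcup_sup.
Qed.

Lemma F_cl X p : X \in F -> p \in X -> f p \in X.
Proof.
move=> XF pX; apply: (subsetP (Forb XF pX)); rewrite inE; exact: fconnect1.
Qed.

Lemma card3 (a b c : T * T) : a != b -> b != c -> a != c -> #|[set a; b; c]| = 3.
Proof.
move=> ab bc ac.
have -> : [set a; b; c] = a |: [set b; c] by apply/setP => z; rewrite !inE orbA.
by rewrite cardsU1 cards2 !inE negb_or ab ac bc.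
Qed.

Lemma in3 (X : {set T * T}) a b c z : #|X| = 3 -> a \in X -> b \in X -> c \in X ->
  a != b -> b != c -> a != c -> z \in X -> [|| z == a, z == b | z == c].
Proof.
move=> X3 aX bX cX ab bc ac zX.
have : [set a; b; c] == X.
  rewrite eqEcard X3 card3 // andbT; apply/subsetP => y; rewrite !inE.
  by case/orP => [/orP[]|] /eqP ->.
by move/eqP => E; move: zX; rewrite -E !inE -orbA.
Qed.

Lemma face3 X u v : X \in F -> #|X| = 3 -> (u,v) \in X ->
  exists w, X = tri u v w /\ [/\ e u v, e v w & e w u].
Proof.
move=> XF X3 pX.
set p := (u, v) in pX *.
have dX : forall q, q \in X -> q \in darts e by move=> q; apply: (subsetP (F_sub XF)).
have p1X := F_cl XF pX; have p2X := F_cl XF p1X; have p3X := F_cl XF p2X.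
set p1 := f p in p1X p2X p3X *; set p2 := f p1 in p2X p3X *; set p3 := f p2 in p3X *.
have n01 : p != p1 by rewrite eq_sym f_neq ?dX.
have n12 : p1 != p2 by rewrite eq_sym f_neq ?dX.
have n23 : p2 != p3 by rewrite eq_sym f_neq ?dX.
have n02 : p != p2.
  apply/negP => /eqP E.
  have : ~~ (X \subset [set p; p1]).
    apply/negP => /subset_leq_card; rewrite X3 cards2 n01; done.
  case/subsetPn => r rX; rewrite !inE negb_or => /andP[rp rp1].
  have frX := F_cl XF rX.
  have rp1' : p1 != r by rewrite eq_sym.
  have rp' : p != r by rewrite eq_sym.
  case/or3P: (in3 X3 pX p1X rX n01 rp1' rp' frX) => /eqP H.
  - by move: rp1; rewrite -(f_inj (dX _ rX) (dX _ p1X)) ?eqxx // H E.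
  - by move: rp; rewrite -(f_inj (dX _ rX) (dX _ pX)) ?eqxx // H.
  - by move: (f_neq (dX _ rX)); rewrite H eqxx.
have p3p : p3 = p.
  case/or3P: (in3 X3 pX p1X p2X n01 n12 n02 p3X) => /eqP H //.
    by move: n02; rewrite -(f_inj (dX _ p2X) (dX _ pX)) ?eqxx // H.
  by move: n23; rewrite H eqxx.
have [d1 e1] := f_dart (dX _ pX).
have [d2 e2] := f_dart (dX _ p1X).
have [d3 e3] := f_dart (dX _ p2X).
exists p1.2.
have P1 : p1 = (v, p1.2) by rewrite [LHS]surjective_pairing e1.
have P2 : p2 = (p1.2, u).
  have : p3.1 = u by rewrite p3p.
  by rewrite e3 -e2 => <-; rewrite [LHS]surjective_pairing.
have E : X = tri u v p1.2.
  apply/eqP; rewrite eq_sym eqEcard X3 -P1 -P2 card3 // andbT.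
  by apply/subsetP => y; rewrite !inE; case/orP => [/orP[]|] /eqP ->.
split=> //; split.
- by move: (dX _ pX); rewrite dartE.
- by move: d1; rewrite -/p1 P1 dartE.
- by move: d2; rewrite -/p2 P2 dartE.
Qed.

Lemma tri_rot (u v w : T) : tri u v w = tri v w u.
Proof. by apply/setP => z; rewrite !inE [RHS]orbC orbA. Qed.

Lemma ne_of_e (a b : T) : e a b -> a != b.
Proof. by apply: contraTneq => ->; rewrite eirr. Qed.

Lemma nbr_tri (u v w : T) : e u v -> e v w -> e w u -> tri u v w \in F -> tri v u w \in F ->
  forall z, e u z -> (z == v) || (z == w).
Proof.
move=> euv evw ewu XF YF z euz.
have nuv := ne_of_e euv; have nvw := ne_of_e evw; have nwu := ne_of_e ewu.
have dwu : (w,u) \in darts e by rewrite dartE.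
have dvu : (v,u) \in darts e by rewrite dartE esym.
have H1 : sigma (u,w) = (u,v).
  have wX : (w,u) \in tri u v w by rewrite !inE eqxx !orbT.
  have := F_cl XF wX; rewrite !inE.
  have [_] := f_dart dwu; rewrite /facef /=.
  case: (sigma (u,w)) => a b /= ->.
  by rewrite !xpair_eqE !eqxx (negbTE nuv) (eq_sym u w) (negbTE nwu) /= !orbF => /eqP ->.
have H2 : sigma (u,v) = (u,w).
  have wX : (v,u) \in tri v u w by rewrite !inE eqxx.
  have := F_cl YF wX; rewrite !inE.
  have [_] := f_dart dvu; rewrite /facef /=.
  case: (sigma (u,v)) => a b /= ->.
  by rewrite !xpair_eqE !eqxx /= (negbTE nuv) (eq_sym u w) (negbTE nwu) /= orbF => /eqP ->.
have duv : (u,v) \in darts e by rewrite dartE.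
have duz : (u,z) \in darts e by rewrite dartE.
have := sig_conn duv duz erefl.
move/(fconn_in (A := [set (u,v); (u,w)])).
rewrite !inE !xpair_eqE !eqxx /=; apply=> //.
by move=> q; rewrite !inE => /orP[] /eqP ->; rewrite ?H1 ?H2 eqxx ?orbT.
Qed.

Hypothesis Fconn : darts e != set0 ->
  forall p q, p \in darts e -> q \in darts e -> connect (face_rel e F) p q.

Lemma connect_inv (U : finType) (R : rel U) (A : pred U) :
  (forall x y, A x -> R x y -> A y) -> forall x y, connect R x y -> A x -> A y.
Proof.
move=> H x y /connectP [p pth ->]; elim: p x pth => //= z p IH x /andP[Rxz pth] Ax.
exact: IH z pth (H _ _ Ax Rxz).
Qed.

Lemma tri_comp (u v w : T) : e u v -> e v w -> e w u -> tri u v w \in F -> tri v u w \in F ->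
  forall q, q \in darts e -> q.1 \notin [set u; v; w] -> False.
Proof.
move=> euv evw ewu XF YF q qd qV.
have XF' : tri v w u \in F by rewrite -tri_rot.
have XF'' : tri w u v \in F by rewrite tri_rot.
have YF' : tri w v u \in F by rewrite tri_rot.
have YF'' : tri u w v \in F by rewrite -tri_rot.
have nu := nbr_tri euv evw ewu XF YF.
have nv := nbr_tri evw ewu euv XF' YF'.
have nw := nbr_tri ewu euv evw XF'' YF''.
set V := [set u; v; w].
have closV : forall a b, a \in V -> e a b -> b \in V.
  move=> a b; rewrite !inE -orbA => /or3P[] /eqP -> eab.
  - by case/orP: (nu _ eab) => ->; rewrite ?orbT.
  - by case/orP: (nv _ eab) => ->; rewrite ?orbT.
  - by case/orP: (nw _ eab) => ->; rewrite ?orbT.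
have inXY : forall r, r \in darts e -> r.1 \in V -> r \in tri u v w :|: tri v u w.
  case=> a b; rewrite dartE /= !inE -orbA => eab /or3P[] /eqP Ea; subst a.
  - by case/orP: (nu _ eab) => /eqP ->; rewrite !eqxx ?orbT.
  - by case/orP: (nv _ eab) => /eqP ->; rewrite !eqxx ?orbT.
  - by case/orP: (nw _ eab) => /eqP ->; rewrite !eqxx ?orbT.
have XYV : forall r, r \in tri u v w :|: tri v u w -> r.1 \in V.
  by move=> r; rewrite !inE -!orbA => /or3P[/eqP->|/eqP->|/or4P[]/eqP->]; rewrite ?eqxx ?orbT.
have triv : trivIset F by case/and3P: Fpart.
have duv : (u,v) \in darts e by rewrite dartE.
have dne : darts e != set0 by apply/set0Pn; exists (u,v).
have cq := Fconn dne duv qd.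
move: qV; rewrite (connect_inv (A := fun r => r.1 \in V) _ cq) //; last first.
  by rewrite !inE eqxx.
move=> r r' rV; rewrite /face_rel => /and3P[rd r'd /orP[]].
  case/existsP => X /and3P[XF0 rX r'X].
  move: (inXY r rd rV); rewrite inE => /orP[] rX0.
    have E := def_pblock triv XF0 rX; rewrite (def_pblock triv XF rX0) in E.
    by apply: XYV; rewrite in_setU E r'X.
  have E := def_pblock triv XF0 rX; rewrite (def_pblock triv YF rX0) in E.
  by apply: XYV; rewrite in_setU E r'X orbT.
move/connect_inv; apply => // a b; exact: closV.
Qed.

Local Notation EE := (E_I e F).

Lemma EI_mem (eps : {set T}) : eps \in EE ->
  exists u v, [/\ (u, v) \in darts e, EI_dart F (u, v) & eps = [set u; v]].
Proof.
case/imsetP => q; rewrite inE => /andP[qd qI] ->.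
by exists q.1, q.2; rewrite -surjective_pairing.
Qed.

Hypothesis degB : forall u, degI e F u <= 9.

Lemma deg_count z : #|[set eps in EE | z \in eps]| <= 9.
Proof.
apply: leq_trans (degB z); rewrite /degI.
set D := [set v | [set z; v] \in EE].
have H : [set eps in EE | z \in eps] \subset (fun v => [set z; v]) @: D.
  apply/subsetP => eps; rewrite inE => /andP[epsE zeps].
  have [u [v [_ _ E]]] := EI_mem epsE.
  move: zeps; rewrite E !inE => /orP[] /eqP Ez; subst z.
    by apply: imset_f; rewrite inE -E.
  by rewrite setUC; apply: imset_f; rewrite inE setUC -E.
exact: leq_trans (subset_leq_card H) (leq_imset_card _ _).
Qed.

Lemma avoid (s : seq T) : 9 * size s < #|EE| ->
  exists u v, [/\ (u, v) \in darts e, EI_dart F (u, v), u \notin s & v \notin s].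
Proof.
pose B (s : seq T) := [set eps in EE | has (fun z => z \in eps) s].
have cB : forall s0, #|B s0| <= 9 * size s0.
  elim=> [|z s0 IH].
    by rewrite leqn0 cards_eq0; apply/eqP/setP => eps; rewrite !inE andbF.
  have sub : B (z :: s0) \subset [set eps in EE | z \in eps] :|: B s0.
    by apply/subsetP => eps; rewrite !inE /= andb_orr => /orP[] ->; rewrite ?orbT.
  apply: leq_trans (subset_leq_card sub) _.
  apply: leq_trans (leq_card_setU _ _) _.
  by rewrite /= mulnS leq_add ?deg_count.
move=> lt.
have : ~~ (EE \subset B s).
  by apply/negP => /subset_leq_card H; have := leq_trans H (cB s); rewrite leqNgt lt.
case/subsetPn => eps epsE; rewrite inE epsE /= => nh.
have [u [v [d I E]]] := EI_mem epsE.
exists u, v; split=> //.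
  by apply/negP => us; move: nh; apply/negP/negPn/hasP; exists u => //; rewrite E !inE eqxx.
by apply/negP => vs; move: nh; apply/negP/negPn/hasP; exists v => //; rewrite E !inE eqxx orbT.
Qed.

Record good (x y u v : T) : Prop := Good {
  g_uv : u != v; g_xy : x != y; g_xu : x != u; g_xv : x != v; g_yu : y != u; g_yv : y != v;
  g_euv : e u v; g_eux : e u x; g_evx : e v x; g_euy : e u y; g_evy : e v y }.

Lemma good_sw x y u v : good x y u v -> good x y v u.
Proof. by case=> *; constructor; first [done | by rewrite eq_sym | by rewrite esym]. Qed.

Lemma good_pl x y u v : good x y u v -> good y x u v.
Proof. by case=> *; constructor; first [done | by rewrite eq_sym | by rewrite esym]. Qed.

Definition tface (u v w : T) := (tri u v w \in F) || (tri v u w \in F).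

Lemma tface_sw u v w : tface u v w = tface v u w.
Proof. by rewrite /tface orbC. Qed.

Lemma face_on X u v : X \in F -> three_face X -> on_face (u, v) X ->
  exists w, [/\ X = tri u v w \/ X = tri v u w, e u w, e v w & e u v].
Proof.
move=> XF /eqP X3 /orP[] /= H.
  have [w [E [a b c]]] := face3 XF X3 H.
  by exists w; split; [left | rewrite esym | done | done].
have [w [E [a b c]]] := face3 XF X3 H.
by exists w; split; [right | done | rewrite esym | rewrite esym].
Qed.

Lemma EI_good u v : (u, v) \in darts e -> EI_dart F (u, v) -> 27 < #|EE| ->
  exists w1 w2, [/\ good w1 w2 u v, tface u v w1 & tface u v w2].
Proof.
move=> d /existsP [X /andP[XF /existsP [Y /andP[YF /and5P[XY X3 Y3 oX oY]]]]] lt.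
have [w1 [EX e1 e2 euv]] := face_on XF X3 oX.
have [w2 [EY e3 e4 _]] := face_on YF Y3 oY.
have tX : tface u v w1 by rewrite /tface; case: EX => <-; rewrite XF ?orbT.
have tY : tface u v w2 by rewrite /tface; case: EY => <-; rewrite YF ?orbT.
have [Ew|nw] := eqVneq w1 w2.
  subst w2.
  have [q1 [q2 [qd _ qn _]]] := avoid (s := [:: u; v; w1]) lt.
  have [XT YT] : tri u v w1 \in F /\ tri v u w1 \in F.
    case: EX => EX; case: EY => EY; subst X Y; rewrite ?eqxx // in XY;
    by rewrite ?XF ?YF.
  apply: False_ind; apply: (tri_comp _ _ _ XT YT qd) => //.
  - by rewrite esym.
  - by move: qn; rewrite !inE /= -orbA.
exists w1, w2; split=> //; constructor => //; rewrite 1?eq_sym; apply: ne_of_e => //; by rewrite esym.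
Qed.

Hypothesis noC : ~ contains_subgraph e C3_Theta4.

Lemma mkC (a b c p q r s : T) : uniq [:: a; b; c; p; q; r; s] ->
  e a b -> e b c -> e a c -> e p q -> e p r -> e p s -> e q r -> e q s -> False.
Proof.
move=> U eab ebc eac epq epr eps eqr eqs; apply: noC.
exists (fun i : 'I_7 => nth a [:: a; b; c; p; q; r; s] i); split.
  move=> i j /eqP; rewrite nth_uniq ?size_tuple //= => /eqP; exact: val_inj.
have ea := esym; move=> [[|[|[|[|[|[|[|i]]]]]]] Hi] [[|[|[|[|[|[|[|j]]]]]]] Hj] //=;
  rewrite /C3_Theta4 /= => _; by rewrite // esym.
Qed.

Lemma in_notin (a b : T) (s : seq T) : a \in s -> b \notin s -> a != b.
Proof. by move=> As; apply: contraNneq => <-. Qed.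

Ltac neq := match goal with
 | |- is_true (?a != ?b) => first [ assumption | (rewrite eq_sym; assumption)
     | (apply: ne_of_e; assumption) | (apply: ne_of_e; rewrite esym; assumption)
     | match goal with H : is_true (a \in ?s), H' : is_true (b \notin ?s) |- _ => exact: in_notin H H' end
     | match goal with H : is_true (b \in ?s), H' : is_true (a \notin ?s) |- _ => rewrite eq_sym; exact: in_notin H H' end ]
 end.

Ltac splitall := repeat (apply/andP; split).
Ltac dist := rewrite /= ?inE ?negb_or ?andbT; splitall; neq.
Ltac explode H := move: H; rewrite ?inE ?negb_or;
  let rec go := first [case/andP => ? ; go | move=> ?] in go.

Hypothesis big : 88 <= #|EE|.

Lemma exists_EI (s : seq T) : size s <= 9 -> exists u v w1 w2,
  [/\ good w1 w2 u v, tface u v w1, tface u v w2, u \notin s & v \notin s].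
Proof.
move=> ss.
have [u [v [d I us vs]]] : exists u v, [/\ (u, v) \in darts e, EI_dart F (u, v), u \notin s & v \notin s].
  apply: avoid; apply: leq_trans big; rewrite ltnS; apply: leq_trans (leq_mul (leqnn 9) ss) _; done.
have [w1 [w2 [G t1 t2]]] := EI_good d I (leq_trans (isT : 27 < 88) big).
by exists u, v, w1, w2.
Qed.

Lemma poles_in a b c d u v w1 : good c d a b -> (exists w2, good w1 w2 u v) ->
  u \notin [:: a; b; c; d] -> v \notin [:: a; b; c; d] -> w1 \in [:: a; b; c; d].
Proof.
move=> [? ? ? ? ? ? ? ? ? ? ?] [w2 [? ? ? ? ? ? ? ? ? ? ?]] nu nv.
apply/negPn/negP => nw.
explode nu; explode nv; explode nw.
apply: (mkC (a := u) (b := v) (c := w1) (p := a) (q := b) (r := c) (s := d)) => //.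
dist.
Qed.

Lemma same_poles x y u1 v1 u v w w' : good x y u1 v1 -> good w w' u v ->
  u \notin [:: u1; v1; x; y] -> v \notin [:: u1; v1; x; y] -> w \notin [:: u1; v1] ->
  (w == x) || (w == y).
Proof.
move=> [? ? ? ? ? ? ? ? ? ? ?] [? ? ? ? ? ? ? ? ? ? ?] nu nv nw.
apply/negPn/negP => nw'.
explode nu; explode nv; explode nw; explode nw'.
apply: (mkC (a := u) (b := v) (c := w) (p := u1) (q := v1) (r := x) (s := y)) => //.
dist.
Qed.

Definition Rich x y := forall a b c : T, exists u v,
  [/\ good x y u v, u \notin [:: a; b; c] & v \notin [:: a; b; c]].

Lemma get_rich : exists x y, x != y /\ Rich x y.
Proof.
have [u0 [v0 [c [d [G0 _ _ _ _]]]]] := exists_EI (s := [::]) isT.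
have [u1 [v1 [x [y [G1 _ _ n1 n2]]]]] := exists_EI (s := [:: u0; v0; c; d]) isT.
have xS := poles_in G0 (ex_intro _ y G1) n1 n2.
have yS := poles_in G0 (ex_intro _ x (good_pl G1)) n1 n2.
exists x, y; split; first by case: G1.
move=> a' b' c'.
have [u [v [w [w' [G _ _ n3 n4]]]]] :=
  exists_EI (s := [:: u0; v0; c; d; u1; v1; a'; b'; c']) isT.
have nuS : u \notin [:: u0; v0; c; d] by move: n3; rewrite !inE !negb_or => /and5P[-> -> -> -> _].
have nvS : v \notin [:: u0; v0; c; d] by move: n4; rewrite !inE !negb_or => /and5P[-> -> -> -> _].
have wS := poles_in G0 (ex_intro _ w' G) nuS nvS.
have w'S := poles_in G0 (ex_intro _ w (good_pl G)) nuS nvS.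
have nu' : u \notin [:: u1; v1; x; y].
  explode n3; dist.
have nv' : v \notin [:: u1; v1; x; y].
  explode n4; dist.
have nw : w \notin [:: u1; v1] by dist.
have nw' : w' \notin [:: u1; v1] by dist.
have h1 := same_poles G1 G nu' nv' nw.
have h2 := same_poles G1 (good_pl G) nu' nv' nw'.
exists u, v; split.
- have nww' : w != w' by case: G.
  case/orP: h1 => /eqP Ew; case/orP: h2 => /eqP Ew'; subst w w' => //.
  + by rewrite eqxx in nww'.
  + exact: good_pl.
  + by rewrite eqxx in nww'.
- by move: n3; rewrite !inE !negb_or => /and5P[_ _ _ _ /and5P[_ _ -> -> ->]].
- by move: n4; rewrite !inE !negb_or => /and5P[_ _ _ _ /and5P[_ _ -> -> ->]].
Qed.

Lemma triA x y a b c : Rich x y -> e a b -> e b c -> e a c ->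
  (x \in [:: a; b; c]) || (y \in [:: a; b; c]).
Proof.
move=> R eab ebc eac; apply/negPn/negP; rewrite negb_or => /andP[nx ny].
have [u [v [[? ? ? ? ? ? ? ? ? ? ?] nu nv]]] := R a b c.
explode nu; explode nv; explode nx; explode ny.
apply: (mkC (a := a) (b := b) (c := c) (p := u) (q := v) (r := x) (s := y)) => //.
dist.
Qed.

Lemma in3_last (z a b c : T) : z \in [:: a; b; c] -> z != a -> z != b -> z = c.
Proof. by rewrite !inE => /or3P[] /eqP -> ; rewrite ?eqxx. Qed.

Lemma M_good x y u v w1 w2 : Rich x y -> good w1 w2 u v ->
  u \notin [:: x; y] -> v \notin [:: x; y] -> good x y u v.
Proof.
move=> R G nu nv.
have G' := G; case: G' => ? ? ? ? ? ? ? ? ? ? ?.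
explode nu; explode nv.
have h1 := triA R (g_euv G) (g_evx G) (g_eux G).
have h2 := triA R (g_euv G) (g_evy G) (g_euy G).
have k1 : (x == w1) || (y == w1).
  case/orP: h1 => H; [rewrite (in3_last H) ?eqxx // | rewrite (in3_last H) ?eqxx ?orbT //]; neq.
have k2 : (x == w2) || (y == w2).
  case/orP: h2 => H; [rewrite (in3_last H) ?eqxx // | rewrite (in3_last H) ?eqxx ?orbT //]; neq.
have nww : w1 != w2 by case: G.
case/orP: k1 => /eqP E1; case/orP: k2 => /eqP E2; subst w1 w2 => //.
- by rewrite eqxx in nww.
- exact: good_pl.
- by rewrite eqxx in nww.
Qed.

Definition MM x y := [set eps in EE | (x \notin eps) && (y \notin eps)].

Lemma big27 : 27 < #|EE|.
Proof. exact: leq_trans _ big. Qed.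

Lemma M_elt x y eps : Rich x y -> eps \in MM x y -> exists u v, eps = [set u; v] /\ good x y u v.
Proof.
move=> R; rewrite inE => /and3P[epsE nx ny].
have [u [v [d I E]]] := EI_mem epsE.
have [w1 [w2 [G _ _]]] := EI_good d I big27.
exists u, v; split => //; apply: (M_good R G).
  by move: nx ny; rewrite E; move=> nx ny; explode nx; explode ny; dist.
by move: nx ny; rewrite E; move=> nx ny; explode nx; explode ny; dist.
Qed.

Lemma M_triv x y : Rich x y -> trivIset (MM x y).
Proof.
move=> R; apply/trivIsetP => A B AM BM AB.
rewrite -setI_eq0; apply/negPn/negP => /set0Pn [z]; rewrite inE => /andP[zA zB].
have [u [v [EA GA]]] := M_elt R AM.
have [u' [v' [EB GB]]] := M_elt R BM.
have [q1 [EA' GA']] : exists q, A = [set z; q] /\ good x y z q.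
  move: zA; rewrite EA !inE => /orP[] /eqP ->; first by exists v.
  by exists u; split; [rewrite setUC | exact: good_sw].
have [q2 [EB' GB']] : exists q, B = [set z; q] /\ good x y z q.
  move: zB; rewrite EB !inE => /orP[] /eqP ->; first by exists v'.
  by exists u'; split; [rewrite setUC | exact: good_sw].
have nq : q1 != q2 by apply: contraNneq AB => E; rewrite EA' EB' E.
have [u1 [v1 [[? ? ? ? ? ? ? ? ? ? ?] n1 n2]]] := R z q1 q2.
case: GA' => ? ? ? ? ? ? ? ? ? ? ?; case: GB' => ? ? ? ? ? ? ? ? ? ? ?.
explode n1; explode n2.
apply: (mkC (a := u1) (b := v1) (c := y) (p := z) (q := x) (r := q1) (s := q2)) => //;
  try by rewrite esym.
dist.
Qed.

Lemma M_card x y : x != y -> Rich x y -> 2 * #|MM x y| <= #|T| - 2.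
Proof.
move=> nxy R.
have /eqP tr := M_triv R.
have S2 : \sum_(B in MM x y) #|B| = #|MM x y| * 2.
  rewrite -sum_nat_const; apply: eq_bigr => B BM.
  by have [u [v [-> G]]] := M_elt R BM; rewrite cards2 (g_uv G).
have sub : cover (MM x y) \subset ~: [set x; y].
  apply/subsetP => z /bigcupP [B BM zB]; rewrite !inE negb_or.
  move: BM; rewrite inE => /and3P[_ nx ny].
  by apply/andP; split; [apply: (contraNneq _ nx) => <- | apply: (contraNneq _ ny) => <-].
have := subset_leq_card sub.
have := cardsC [set x; y]; rewrite cards2 nxy -tr S2.
move=> H1 H2; rewrite mulnC; apply: leq_trans H2 _.
rewrite -H1; rewrite addKn; done.
Qed.

Lemma set2_eq (a b c d : T) : [set a; b] = [set c; d] -> a != b ->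
  (a = c /\ b = d) \/ (a = d /\ b = c).
Proof.
move=> E nab.
have aE : a \in [set c; d] by rewrite -E !inE eqxx.
have bE : b \in [set c; d] by rewrite -E !inE eqxx orbT.
move: aE bE; rewrite !inE => /orP[]/eqP Ea /orP[]/eqP Eb.
- by move: nab; rewrite Ea Eb eqxx.
- by left.
- by right.
- by move: nab; rewrite Ea Eb eqxx.
Qed.

Definition Pset x y := [set p | [&& p != x, p != y & [set p; x] \in EE]].

Lemma P_face x y p : Rich x y -> x != y -> p \in Pset x y -> tface p x y.
Proof.
move=> R nxy; rewrite inE => /and3P[npx npy pE].
have [u [v [d I E]]] := EI_mem pE.
have [w1 [w2 [G t1 t2]]] := EI_good d I big27.
have [G' [t1' t2']] : [/\ good w1 w2 p x, tface p x w1 & tface p x w2].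
  case: (set2_eq E npx) => [[-> ->] | [-> ->]] //.
  by rewrite tface_sw (tface_sw v); split => //; apply: good_sw.
have [? ? ? ? ? ? ? ? ? ? ?] := G'.
have : (y == w1) || (y == w2).
  apply/negPn/negP; rewrite negb_or => /andP[n1 n2].
  have [u1 [v1 [[? ? ? ? ? ? ? ? ? ? ?] m1 m2]]] := R p w1 w2.
  explode m1; explode m2.
  apply: (mkC (a := u1) (b := v1) (c := y) (p := p) (q := x) (r := w1) (s := w2)) => //;
    try by rewrite esym.
  dist.
by case/orP => /eqP ->.
Qed.

Lemma P_card x y : Rich x y -> x != y -> #|Pset x y| <= 2.
Proof.
move=> R nxy.
have triv : trivIset F by case/and3P: Fpart.
pose P1 := [set p in Pset x y | tri p x y \in F].
pose P2 := [set p in Pset x y | tri x p y \in F].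
have sub : Pset x y \subset P1 :|: P2.
  apply/subsetP => p pP; have := P_face R nxy pP; move: pP; rewrite /tface !inE => -> /=.
  by case/orP => ->; rewrite ?orbT.
apply: leq_trans (subset_leq_card sub) _; apply: leq_trans (leq_card_setU _ _) _.
have c1 : #|P1| <= 1.
  apply/card_le1_eqP => p p'; rewrite !inE => /andP[/and3P[np1 np2 _] F1] /andP[/and3P[np1' np2' _] F2].
  have h1 : (x, y) \in tri p x y by rewrite !inE eqxx ?orbT.
  have h2 : (x, y) \in tri p' x y by rewrite !inE eqxx ?orbT.
  have E := def_pblock triv F1 h1; rewrite (def_pblock triv F2 h2) in E.
  have : (y, p) \in tri p x y by rewrite !inE eqxx ?orbT.
  rewrite -E !inE !xpair_eqE => /orP[/orP[]|] /andP[/eqP a /eqP b] //.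
  - by rewrite b eqxx in np1.
  - by rewrite a eqxx in nxy.
have c2 : #|P2| <= 1.
  apply/card_le1_eqP => p p'; rewrite !inE => /andP[/and3P[np1 np2 _] F1] /andP[/and3P[np1' np2' _] F2].
  have h1 : (y, x) \in tri x p y by rewrite !inE eqxx ?orbT.
  have h2 : (y, x) \in tri x p' y by rewrite !inE eqxx ?orbT.
  have E := def_pblock triv F1 h1; rewrite (def_pblock triv F2 h2) in E.
  have : (x, p) \in tri x p y by rewrite !inE eqxx ?orbT.
  rewrite -E !inE !xpair_eqE => /orP[/orP[]|] /andP[/eqP a /eqP b] //.
  - by rewrite b eqxx in np2.
  - by rewrite a eqxx in nxy.
by rewrite -[2]/(1 + 1) leq_add.
Qed.

Lemma pair_other (eps : {set T}) u v z : eps = [set u; v] -> z \in eps ->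
  exists p, eps = [set p; z] /\ (p == u) || (p == v).
Proof.
move=> E; rewrite E !inE => /orP[] /eqP ->.
  by exists v; rewrite setUC eqxx orbT.
by exists u; rewrite eqxx.
Qed.

Lemma E_card x y : x != y ->
  #|EE| <= #|MM x y| + #|EE :&: [set [set x; y]]| + #|Pset x y| + #|Pset y x|.
Proof.
move=> nxy.
set S1 := [set [set p; x] | p in Pset x y].
set S2 := [set [set p; y] | p in Pset y x].
have sub : EE \subset MM x y :|: (EE :&: [set [set x; y]]) :|: S1 :|: S2.
  apply/subsetP => eps epsE.
  have [u [v [d I E]]] := EI_mem epsE.
  have nuv : u != v by apply: ne_of_e; move: d; rewrite dartE.
  have c2 : #|eps| = 2 by rewrite E cards2 nuv.
  rewrite !in_setU.
  case xe: (x \in eps); case ye: (y \in eps).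
  - have Exy : eps = [set x; y].
      apply/eqP; rewrite eq_sym eqEcard c2 cards2 nxy leqnn andbT.
      by apply/subsetP => z; rewrite !inE => /orP[] /eqP ->.
    by rewrite in_setI epsE /= {2}Exy in_set1 eqxx !orbT.
  - have [p [Ep _]] := pair_other E xe.
    have pP : p \in Pset x y.
      rewrite inE -Ep epsE andbT; apply/andP; split.
        by apply/eqP => Epx; move: c2; rewrite Ep Epx setUid cards1.
      by apply/eqP => Epy; move: ye; rewrite Ep Epy !inE eqxx.
    by rewrite Ep (imset_f (fun p => [set p; x]) pP) !orbT.
  - have [p [Ep _]] := pair_other E ye.
    have pP : p \in Pset y x.
      rewrite inE -Ep epsE andbT; apply/andP; split.
        by apply/eqP => Epx; move: c2; rewrite Ep Epx setUid cards1.
      by apply/eqP => Epy; move: xe; rewrite Ep Epy !inE eqxx.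
    by rewrite Ep (imset_f (fun p => [set p; y]) pP) !orbT.
  - by rewrite inE epsE xe ye.
apply: leq_trans (subset_leq_card sub) _.
apply: leq_trans (leq_card_setU _ _) _; apply: leq_add; last exact: leq_imset_card.
apply: leq_trans (leq_card_setU _ _) _; apply: leq_add; last exact: leq_imset_card.
exact: leq_card_setU.
Qed.

Lemma enum2 (eps : {set T}) u v d : eps = [set u; v] -> u != v ->
  (nth d (enum eps) 0 = u /\ nth d (enum eps) 1 = v) \/
  (nth d (enum eps) 0 = v /\ nth d (enum eps) 1 = u).
Proof.
move=> E nuv.
have sz : size (enum eps) = 2 by rewrite -cardE E cards2 nuv.
have U := enum_uniq (pred_of_set eps).
have M : forall z, (z \in enum eps) = (z \in eps) by move=> z; rewrite mem_enum.
move: sz U M; case: (enum eps) => [|a [|b [|c s]]] //= _.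
rewrite inE andbT => nab M.
have aE : a \in eps by rewrite -M inE eqxx.
have bE : b \in eps by rewrite -M !inE eqxx orbT.
move: aE bE; rewrite E !inE => /orP[]/eqP Ea /orP[]/eqP Eb; subst a b.
- by rewrite eqxx in nab.
- by left.
- by right.
- by rewrite eqxx in nab.
Qed.

Lemma build x y t : x != y -> Rich x y -> e x y -> t <= #|MM x y| ->
  contains_subgraph e (@matching_join_K2 t).
Proof.
move=> nxy R exy tM.
set L := enum (MM x y).
have Ls : t <= size L by rewrite -cardE.
pose g (k : nat) (b : bool) := nth x (enum (nth set0 L k)) b.
have LM : forall k, k < t -> nth set0 L k \in MM x y.
  by move=> k kt; rewrite -mem_enum mem_nth // (leq_trans kt Ls).
have Gk : forall k, k < t -> good x y (g k false) (g k true).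
  move=> k kt; have [u [v [E G]]] := M_elt R (LM k kt).
  by rewrite /g /=; case: (enum2 x E (g_uv G)) => [[-> ->] | [-> ->]] //; apply: good_sw.
have gx : forall k b, k < t -> [/\ e (g k b) x, e (g k b) y, g k b != x & g k b != y].
  move=> k b kt; have [? ? ? ? ? ? ? ? ? ? ?] := Gk k kt.
  by case: b; split => //; rewrite eq_sym.
have gmem : forall k b, k < t -> g k b \in nth set0 L k.
  move=> k b kt; rewrite /g -mem_enum mem_nth // -cardE.
  have [u [v [E G]]] := M_elt R (LM k kt); rewrite E cards2 (g_uv G).
  by case: b.
have Linj : forall k k', k < t -> k' < t -> nth set0 L k = nth set0 L k' -> k = k'.
  move=> k k' kt k't /eqP; rewrite nth_uniq ?enum_uniq ?(leq_trans kt Ls) ?(leq_trans k't Ls) //.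
  by move/eqP.
have /trivIsetP tv := M_triv R.
have disj : forall k k' z, k < t -> k' < t -> z \in nth set0 L k -> z \in nth set0 L k' -> k = k'.
  move=> k k' z kt k't zk zk'; apply: Linj => //.
  case: (eqVneq (nth set0 L k) (nth set0 L k')) => // ne.
  have := tv _ _ (LM k kt) (LM k' k't) ne; rewrite -setI_eq0 => /eqP E0.
  have : z \in set0 by rewrite -E0 inE zk zk'.
  by rewrite inE.
have key : forall i : nat, i < t.*2 -> i./2 < t by move=> i; lia.
have gne : forall k, k < t -> g k false != g k true by move=> k kt; case: (Gk k kt).
pose fv (i : nat) := if i < t.*2 then g i./2 (odd i) else if i == t.*2 then x else y.
have fxy : forall i : nat, t.*2 <= i -> fv i = x \/ fv i = y.
  by move=> i hi; rewrite /fv ltnNge hi /=; case: ifP => _; [left | right].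
exists (fun i : 'I_(t.*2 + 2) => fv i); split.
  move=> i j; case: (ltnP i t.*2) => hi; case: (ltnP j t.*2) => hj.
  - rewrite /fv hi hj => E.
    have ki := key i hi; have kj := key j hj.
    have zi := gmem i./2 (odd i) ki; rewrite E in zi.
    have zj := gmem j./2 (odd j) kj.
    have k_eq := disj _ _ _ ki kj zi zj.
    move: E; rewrite k_eq => E.
    have oe : odd i = odd j.
      move: E (gne _ kj); case: (odd i); case: (odd j) => // ->; by rewrite eqxx.
    apply: val_inj => /=; rewrite -(odd_double_half i) -(odd_double_half j).
    by rewrite oe k_eq.
  - have [_ _ n1 n2] := gx i./2 (odd i) (key i hi).
    by case: (fxy j hj) => ->; rewrite /fv hi => E; rewrite E eqxx in n1 n2.
  - have [_ _ n1 n2] := gx j./2 (odd j) (key j hj).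
    by case: (fxy i hi) => ->; rewrite /fv hj => E; rewrite -E eqxx in n1 n2.
  - have li := ltn_ord i; have lj := ltn_ord j.
    rewrite /fv ltnNge hi ltnNge hj /=.
    case: ifP => /eqP Ei; case: ifP => /eqP Ej => E; apply: val_inj => /=.
    + by rewrite Ei Ej.
    + by rewrite E eqxx in nxy.
    + by rewrite E eqxx in nxy.
    + lia.
move=> i j; rewrite /matching_join_K2 => /andP[nij h].
change (is_true (nat_of_ord i != nat_of_ord j)) in nij.
case: (ltnP i t.*2) => hi; case: (ltnP j t.*2) => hj.
- move: h; rewrite leqNgt hi leqNgt hj /= => /eqP k_eq.
  rewrite /fv hi hj k_eq.
  have oe : odd i != odd j.
    apply: contra nij => /eqP oe; apply/eqP.
    by rewrite -(odd_double_half i) -(odd_double_half j) oe k_eq.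
  have [? ? ? ? ? ? ? ? ? ? ?] := Gk _ (key j hj).
  by move: oe; case: (odd i); case: (odd j) => //= _; rewrite // esym.
- have [a1 a2 _ _] := gx i./2 (odd i) (key i hi).
  by case: (fxy j hj) => ->; rewrite /fv hi.
- have [a1 a2 _ _] := gx j./2 (odd j) (key j hj).
  by case: (fxy i hi) => ->; rewrite /fv hj esym.
- have li := ltn_ord i; have lj := ltn_ord j.
  rewrite /fv ltnNge hi ltnNge hj /=.
  case: ifP => /eqP Ei; case: ifP => /eqP Ej.
  + by move: nij; rewrite Ei Ej eqxx.
  + done.
  + by rewrite esym.
  + move: nij; have -> : nat_of_ord i = nat_of_ord j by lia.
    by rewrite eqxx.
Qed.

Lemma rich_sw x y : Rich x y -> Rich y x.
Proof. by move=> R a b c; have [u [v [G n1 n2]]] := R a b c; exists u, v; split => //; apply: good_pl. Qed.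

Hypothesis n2 : 2 <= #|T|.

Lemma final : 2 * #|EE| <= #|T| + 8 /\
  (#|EE| = #|T|./2 + 4 -> contains_subgraph e (@matching_join_K2 ((#|T| - 2)./2))).
Proof.
have [x [y [nxy R]]] := get_rich.
have Mc := M_card nxy R.
have Ec := E_card nxy.
have P1 := P_card R nxy.
have nyx : y != x by rewrite eq_sym.
have P2 := P_card (rich_sw R) nyx.
have I1 : #|EE :&: [set [set x; y]]| <= 1.
  by rewrite -(cards1 [set x; y]); apply: subset_leq_card; apply: subsetIr.
split; first lia.
move=> Eq.
have xyE : [set x; y] \in EE.
  apply/negPn/negP => nE.
  have : #|EE :&: [set [set x; y]]| = 0.
    apply/eqP; rewrite cards_eq0; apply/eqP/setP => z; rewrite !inE.
    by apply/negP => /andP[zE /eqP zz]; subst z; rewrite zE in nE.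
  lia.
have exy : e x y.
  have [u [v [d _ E]]] := EI_mem xyE.
  by case: (set2_eq E nxy) => [[-> ->]|[-> ->]]; move: d; rewrite dartE //= esym.
apply: (build nxy R exy); lia.
Qed.

End Work.

Unset Implicit Arguments.

Theorem lemma6 (T : finType) (e : rel T) (sigma : T * T -> T * T)
  (F : {set {set T * T}}) :
  plane_embedding e sigma F ->
  174 <= #|T| ->
  ~ contains_subgraph e C3_Theta4 ->
  #|T| < 2 * #|E_I e F| ->
  (forall u : T, degI e F u <= 9) ->
  2 * #|E_I e F| <= #|T| + 8 /\
  (#|E_I e F| = #|T|./2 + 4 ->
     contains_subgraph e (@matching_join_K2 ((#|T| - 2)./2))).
Proof.
case=> [[es ei] [[sd sc] [_ [Fp [Fo [_ Fd]]]]]] nbig noC lt degB.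
have Fconn : darts e != set0 ->
  forall p q, p \in darts e -> q \in darts e -> connect (face_rel e F) p q.
  by move=> h; case: (Fd h).
have big : 88 <= #|E_I e F| by lia.
have n2 : 2 <= #|T| by lia.
exact: (final es ei sd sc Fp Fo Fconn degB noC big n2).
Qed.
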